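(* Let $\rho:\mathcal G\to G$ be a morphism of flat affine group schemes over $R$ which induces an isomorphism $\mathcal G_K\to G_K$ on generic fibres. Put $G_0=G$ and $\rho_0=\rho$. Inductively, having $\rho_n:\mathcal G\to G_n$, let $G_{n+1}\to G_n$ be the Neron blowup of $G_n$ at the closed subgroup scheme $\mathrm{Im}(\rho_n\otimes k)\subset G_n\otimes k$ (the schematic image of $\rho_n\otimes k$), and let $\rho_{n+1}:\mathcal G\to G_{n+1}$ be the morphism through which $\rho_n$ factors (by the universal property of the Neron blowup). Then $\varprojlim_n\rho_n:\mathcal G\to\varprojlim_n G_n$ is an isomorphism. (No finite type hypothesis is needed.)
   Context: $R$ is a discrete valuation ring with uniformizer $\pi$, fraction field $K$, residue field $k$. For a flat affine group scheme $G$ over $R$ we regard $R[G]\subset K[G]$. For a closed subgroup $H_0\subset G\otimes k$ with ideal $J\subset R[G]$ (inverse image of its ideal in $k[G]$), the Neron blowup $G'$ of $G$ at $H_0$ is $\mathrm{Spec}$ of the subring of $K[G]$ generated by $R[G]$ and $\pi^{-1}J$. Universal property: if $\mathcal G\to G$ is a morphism of flat affine group schemes with $\mathcal G_k\to G_k$ factoring through $H_0$, it factors uniquely through $G'\to G$. The sequence $\cdots\to G_1\to G_0$ in the claim is called the standard blowup sequence of $\mathcal G\to G$. *)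

(* Defs.v *)
From HB Require Import structures.
From mathcomp Require Import all_boot all_order all_algebra.
Set Implicit Arguments. Unset Strict Implicit. Unset Printing Implicit Defensive.
Import GRing.Theory.
Local Open Scope ring_scope.

Definition is_dvr_uniformizer (R : idomainType) (pi : R) : Prop :=
  pi != 0 /\ pi \isn't a GRing.unit /\
  (forall x : R, x != 0 -> exists (n : nat) (u : R), u \is a GRing.unit /\ x = u * pi ^+ n).

Definition is_alghom (R : comNzRingType) (A S : comAlgType R) (f : A -> S) : Prop :=
  (forall x y, f (x + y) = f x + f y) /\ (forall x y, f (x * y) = f x * f y) /\
  f 1 = 1 /\ (forall (r : R) x, f (r *: x) = r *: f x).

(* S-valued points of Spec A, i.e. Hom_{R-alg}(A, S). *)
Definition pts (R : comNzRingType) (A S : comAlgType R) := {f : A -> S | is_alghom f}.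

Lemma is_alghom_comp (R : comNzRingType) (A B S : comAlgType R) (g : pts A B) (h : pts B S) :
  is_alghom (fun a => sval h (sval g a)).
Proof.
case: g => g [g1 [g2 [g3 g4]]]; case: h => h [h1 [h2 [h3 h4]]] /=.
split; [|split; [|split]] => *; by rewrite ?g1 ?g2 ?g3 ?g4 ?h1 ?h2 ?h3 ?h4.
Qed.

Definition pcomp (R : comNzRingType) (A B S : comAlgType R) (g : pts A B) (h : pts B S)
  : pts A S := exist _ _ (is_alghom_comp g h).

(* An affine group scheme structure on Spec A: a group structure on the
   points Hom_{R-alg}(A, S), natural in the R-algebra S (functor of points). *)
Record grp_sch (R : comNzRingType) (A : comAlgType R) := GrpSch {
  gmul : forall S : comAlgType R, pts A S -> pts A S -> pts A S;
  gone : forall S : comAlgType R, pts A S;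
  ginv : forall S : comAlgType R, pts A S -> pts A S;
  gmulA : forall S (x y z : pts A S), gmul (gmul x y) z = gmul x (gmul y z);
  gmul1 : forall S (x : pts A S), gmul (gone S) x = x;
  gmulV : forall S (x : pts A S), gmul (ginv x) x = gone S;
  gnat : forall (S S' : comAlgType R) (h : pts S S') (x y : pts A S),
      pcomp (gmul x y) h = gmul (pcomp x h) (pcomp y h)
}.

(* Flatness over a DVR = pi-torsion-freeness. *)
Definition flat_over (R : comNzRingType) (pi : R) (A : comAlgType R) : Prop :=
  forall a : A, pi *: a = 0 -> a = 0.

(* A morphism of group schemes Spec A1 -> Spec A2 given by the comorphism
   phi : A2 -> A1 (it is a homomorphism on points for every S). *)
Definition grp_hom (R : comNzRingType) (A1 A2 : comAlgType R)
  (G1 : grp_sch A1) (G2 : grp_sch A2) (phi : pts A2 A1) : Prop :=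
  forall (S : comAlgType R) (x y : pts A1 S),
    pcomp phi (gmul G1 x y) = gmul G2 (pcomp phi x) (pcomp phi y).

(* The morphism Spec A1 -> Spec A2 with comorphism phi induces an isomorphism
   on generic fibres: bijection on S-points for every R-algebra S in which
   pi is invertible (= every K-algebra, K = R[1/pi]). *)
Definition generic_iso (R : comNzRingType) (pi : R) (A1 A2 : comAlgType R)
  (phi : pts A2 A1) : Prop :=
  forall S : comAlgType R, (exists s : S, s * pi%:A = 1) ->
    bijective (fun x : pts A1 S => pcomp phi x).

Definition in_subring_gen (T : comNzRingType) (X : T -> Prop) (t : T) : Prop :=
  forall P : T -> Prop,
    (forall x, X x -> P x) -> P 1 ->
    (forall x y, P x -> P y -> P (x - y)) ->
    (forall x y, P x -> P y -> P (x * y)) -> P t.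

(* f : A -> A' exhibits Spec A' -> Spec A as the Neron blowup of Spec A at the
   closed subscheme of the special fibre whose ideal, pulled back to A, is J:
   A' is pi-torsion free, f is injective (so A' sits inside A[1/pi] = K[G]),
   f(j)/pi lies in A' for every j in J, and A' is generated as a ring by
   f(A) and pi^{-1} f(J). *)
Definition neron_blowup (R : comNzRingType) (pi : R) (A A' : comAlgType R)
  (J : A -> Prop) (f : pts A A') : Prop :=
  flat_over pi A' /\ injective (sval f) /\
  (forall j, J j -> exists b : A', pi *: b = sval f j) /\
  (forall t : A', in_subring_gen
      (fun x : A' => (exists a, x = sval f a) \/ (exists j, J j /\ pi *: x = sval f j)) t).

(* Ideal (pulled back to A) of the schematic image of (Spec C -> Spec A) (x) k,
   k = R/pi: the kernel of A/pi -> C/pi, pulled back to A. *)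
Definition sch_image_special_ideal (R : comNzRingType) (pi : R) (A C : comAlgType R)
  (phi : pts A C) : A -> Prop :=
  fun a => exists c : C, sval phi a = pi *: c.

Fixpoint trans (R : comNzRingType) (A : nat -> comAlgType R)
  (f : forall n, pts (A n) (A n.+1)) (n k : nat) : A n -> A (k + n)%N :=
  match k return A n -> A (k + n)%N with
  | 0 => fun a => a
  | k'.+1 => fun a => sval (f (k' + n)%N) (@trans R A f n k' a)
  end.
Arguments trans {R A} f n k _.

(* Main.v *)
Require Import Defs.
From HB Require Import structures.
From mathcomp Require Import all_boot all_order all_algebra.
From mathcomp Require Import ring.
Import GRing.Theory.
Local Open Scope ring_scope.
Local Open Scope quotient_scope.
Set Implicit Arguments. Unset Strict Implicit. Unset Printing Implicit Defensive.
From Stdlib Require Import FunctionalExtensionality ProofIrrelevance.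

Lemma rl_trans (B : comNzRingType) (a b c u v w : B) :
  b * u = a * v -> c * v = b * w -> b * (c * u - a * w) = 0.
Proof.
move=> H1 H2; have -> : b * (c * u - a * w) = c * (b * u) - a * (b * w) by ring.
by rewrite H1 -H2; ring.
Qed.

Lemma rl_add (B : comNzRingType) (a a' b b' u u' v v' : B) :
  a' * u = a * u' -> b' * v = b * v' ->
  (a' * b') * (b * u + a * v) = (a * b) * (b' * u' + a' * v').
Proof.
move=> H1 H2.
have -> : (a' * b') * (b * u + a * v) = b' * b * (a' * u) + a' * a * (b' * v) by ring.
by rewrite H1 H2; ring.
Qed.

Lemma rl_mul (B : comNzRingType) (a a' b b' u u' v v' : B) :
  a' * u = a * u' -> b' * v = b * v' ->
  (a' * b') * (u * v) = (a * b) * (u' * v').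
Proof.
move=> H1 H2.
have -> : (a' * b') * (u * v) = (a' * u) * (b' * v) by ring.
by rewrite H1 H2; ring.
Qed.

Section Loc.
Variables (R : comNzRingType) (pi : R) (B : comAlgType R).
Hypothesis flatB : flat_over pi B.

Local Notation P := (pi%:A : B).
Definition LT := (B * nat)%type.
Definition lequiv (x y : LT) := P ^+ y.2 * x.1 == P ^+ x.2 * y.1.

Lemma flatP k (z : B) : P ^+ k * z = 0 -> z = 0.
Proof.
elim: k => [|k IH]; first by rewrite expr0 mul1r.
rewrite exprS -mulrA mulr_algl => /flatB; exact: IH.
Qed.

Lemma lequiv_refl : reflexive lequiv.
Proof. by move=> x; rewrite /lequiv mulrC. Qed.
Lemma lequiv_sym : symmetric lequiv.
Proof. by move=> x y; rewrite /lequiv eq_sym. Qed.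
Lemma lequiv_trans : transitive lequiv.
Proof.
move=> y x z /eqP h1 /eqP h2; apply/eqP; apply/eqP; rewrite -subr_eq0; apply/eqP.
apply: (@flatP y.2); apply: rl_trans.
- by rewrite /lequiv in h1 *; exact: h1.
- exact: h2.
Qed.

Canonical lequiv_equiv := EquivRel lequiv lequiv_refl lequiv_sym lequiv_trans.
Definition Loc := {eq_quot lequiv}.
HB.instance Definition _ : EqQuotient _ lequiv Loc := EqQuotient.on Loc.
HB.instance Definition _ := Choice.on Loc.

Lemma pieqP (x y : LT) : \pi_Loc x = \pi_Loc y <-> P ^+ y.2 * x.1 = P ^+ x.2 * y.1.
Proof. split; [move/eqmodP/eqP; exact| move=> h; apply/eqmodP/eqP; exact h]. Qed.

Lemma repr_eq (x : LT) : P ^+ (repr (\pi_Loc x)).2 * x.1 = P ^+ x.2 * (repr (\pi_Loc x)).1.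
Proof. by apply/pieqP; rewrite reprK. Qed.

Definition addf (x y : LT) : LT := (P ^+ y.2 * x.1 + P ^+ x.2 * y.1, (x.2 + y.2)%N).
Definition oppf (x : LT) : LT := (- x.1, x.2).
Definition mulf (x y : LT) : LT := (x.1 * y.1, (x.2 + y.2)%N).
Definition scalef (r : R) (x : LT) : LT := (r%:A * x.1, x.2).

Definition ladd_def (z w : Loc) : Loc := \pi_Loc (addf (repr z) (repr w)).
Definition lopp_def (z : Loc) : Loc := \pi_Loc (oppf (repr z)).
Definition lmul_def (z w : Loc) : Loc := \pi_Loc (mulf (repr z) (repr w)).
Definition lscale_def (r : R) (z : Loc) : Loc := \pi_Loc (scalef r (repr z)).
Definition ladd := locked ladd_def.
Definition lopp := locked lopp_def.
Definition lmul := locked lmul_def.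
Definition lscale := locked lscale_def.
Definition lzero : Loc := \pi_Loc (0, 0%N).
Definition lone : Loc := \pi_Loc (1, 0%N).

Lemma pi_add x y : ladd (\pi_Loc x) (\pi_Loc y) = \pi_Loc (addf x y).
Proof.
rewrite /ladd -lock.
apply/pieqP; rewrite /= !exprD; symmetry; apply: rl_add; exact: repr_eq.
Qed.
Lemma pi_mul x y : lmul (\pi_Loc x) (\pi_Loc y) = \pi_Loc (mulf x y).
Proof.
rewrite /lmul -lock.
apply/pieqP; rewrite /= !exprD; symmetry; apply: rl_mul; exact: repr_eq.
Qed.
Lemma pi_opp x : lopp (\pi_Loc x) = \pi_Loc (oppf x).
Proof. rewrite /lopp -lock; apply/pieqP; rewrite /= !mulrN; congr (- _); symmetry; exact: repr_eq. Qed.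
Lemma pi_scale r x : lscale r (\pi_Loc x) = \pi_Loc (scalef r x).
Proof. rewrite /lscale -lock; apply/pieqP; rewrite /= mulrCA [RHS]mulrCA; congr (_ * _); symmetry; exact: repr_eq. Qed.

Ltac qsolve := repeat (first [rewrite pi_add | rewrite pi_mul | rewrite pi_opp | rewrite pi_scale]); apply/pieqP; rewrite /= ?exprD ?expr0; ring.

Lemma laddA : associative ladd.
Proof. by elim/quotW=> x; elim/quotW=> y; elim/quotW=> z; qsolve. Qed.
Lemma laddC : commutative ladd.
Proof. by elim/quotW=> x; elim/quotW=> y; qsolve. Qed.
Lemma ladd0 : left_id lzero ladd.
Proof. by elim/quotW=> x; rewrite /lzero; qsolve. Qed.
Lemma laddN : left_inverse lzero lopp ladd.
Proof. by elim/quotW=> x; rewrite /lzero; qsolve. Qed.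

HB.instance Definition _ := GRing.isZmodule.Build Loc laddA laddC ladd0 laddN.
Lemma piD x y : \pi_Loc x + \pi_Loc y = \pi_Loc (addf x y). Proof. exact: pi_add. Qed.

Lemma lmulA : associative lmul.
Proof. by elim/quotW=> x; elim/quotW=> y; elim/quotW=> z; qsolve. Qed.
Lemma lmulC : commutative lmul.
Proof. by elim/quotW=> x; elim/quotW=> y; qsolve. Qed.
Lemma lmul1 : left_id lone lmul.
Proof. by elim/quotW=> x; rewrite /lone; qsolve. Qed.
Lemma lmulDl : left_distributive lmul ladd.
Proof. by elim/quotW=> x; elim/quotW=> y; elim/quotW=> z; qsolve. Qed.
Lemma lone0 : lone != lzero.
Proof.
apply/negP => /eqP /pieqP /=; rewrite !expr0 !mul1r; apply/eqP; exact: oner_neq0.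
Qed.

HB.instance Definition _ :=
  GRing.Zmodule_isComNzRing.Build Loc lmulA lmulC lmul1 lmulDl lone0.

Lemma lscaleA a b v : lscale a (lscale b v) = lscale (a * b) v.
Proof. elim/quotW: v => x; rewrite !pi_scale; apply/pieqP; rewrite /= [a%:A * _]mulr_algl ![b%:A * _]mulr_algl [(a*b)%:A * _]mulr_algl scalerA. done. Qed.
Lemma lscale1 : left_id 1 lscale.
Proof. elim/quotW=> x; rewrite pi_scale; apply/pieqP; rewrite /= scale1r; ring. Qed.
Lemma lscaleDr : right_distributive lscale ladd.
Proof. move=> a; elim/quotW=> x; elim/quotW=> y; qsolve. Qed.
Lemma lscaleDl v : {morph lscale^~ v: a b / a + b >-> a + b}.
Proof. move=> a b; elim/quotW: v => x; rewrite !pi_scale piD; apply/pieqP; rewrite /= scalerDl exprD; ring. Qed.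

HB.instance Definition _ :=
  GRing.Zmodule_isLmodule.Build R Loc lscaleA lscale1 lscaleDr lscaleDl.

Lemma piM x y : \pi_Loc x * \pi_Loc y = \pi_Loc (mulf x y). Proof. exact: pi_mul. Qed.
Lemma piZ r x : r *: \pi_Loc x = \pi_Loc (scalef r x). Proof. exact: pi_scale. Qed.
Lemma lscaleAl (a : R) (u v : Loc) : a *: (u * v) = (a *: u) * v.
Proof. elim/quotW: u => x; elim/quotW: v => y; rewrite !piM !piZ piM; apply/pieqP; rewrite /=; ring. Qed.

HB.instance Definition _ := GRing.Lmodule_isLalgebra.Build R Loc lscaleAl.
HB.instance Definition _ := GRing.Lalgebra_isComAlgebra.Build R Loc.


Lemma pi1 : \pi_Loc (1, 0%N) = 1 :> Loc. Proof. by []. Qed.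

Definition liota (b : B) : Loc := \pi_Loc (b, 0%N).

Lemma liota_hom : is_alghom liota.
Proof.
split; [|split; [|split]].
- move=> x y; rewrite /liota piD; apply/pieqP; rewrite /=; ring.
- move=> x y; rewrite /liota piM; apply/pieqP; rewrite /=; ring.
- by [].
- by move=> r x; rewrite /liota piZ /scalef /= mulr_algl.
Qed.

Definition liotaP : pts B Loc := exist _ liota liota_hom.

Lemma liota_inj : injective liota.
Proof. by move=> x y /pieqP /=; rewrite !expr0 !mul1r. Qed.

Lemma liota_inv : exists s : Loc, s * pi%:A = 1.
Proof.
exists (\pi_Loc (1, 1%N)); rewrite -pi1 piZ piM; apply/pieqP; rewrite /= expr0 expr1; ring.
Qed.
End Loc.

Section AlgHom.
Variables (R : comNzRingType) (pi : R) (B1 B2 : comAlgType R) (g : pts B1 B2).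
Local Notation gg := (sval g).
Lemma gD x y : gg (x + y) = gg x + gg y. Proof. by case: g => h [? ?]. Qed.
Lemma gM x y : gg (x * y) = gg x * gg y. Proof. by case: g => h [? [? ?]]. Qed.
Lemma gunit : gg 1 = 1. Proof. by case: g => h [? [? [? ?]]]. Qed.
Lemma gZ r x : gg (r *: x) = r *: gg x. Proof. by case: g => h [? [? [? ?]]]. Qed.
Lemma gzero : gg 0 = 0.
Proof. by apply: (addrI (gg 0)); rewrite -gD !addr0. Qed.
Lemma gN x : gg (- x) = - gg x.
Proof. by apply: (addrI (gg x)); rewrite -gD !subrr gzero. Qed.
Lemma gB x y : gg (x - y) = gg x - gg y.
Proof. by rewrite gD gN. Qed.
Lemma gPX k (b : B1) : gg ((pi%:A) ^+ k * b) = (pi%:A) ^+ k * gg b.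
Proof.
elim: k b => [|k IH] b; first by rewrite !expr0 !mul1r.
rewrite exprS -!mulrA !mulr_algl gZ IH.
by rewrite exprS -mulrA mulr_algl.
Qed.
End AlgHom.

Lemma pts_eq (R : comNzRingType) (B1 B2 : comAlgType R) (p q : pts B1 B2) :
  (forall a, sval p a = sval q a) -> p = q.
Proof.
case: p q => [p hp] [q hq] /= h.
have e : p = q by apply: functional_extensionality.
subst q; f_equal; apply: proof_irrelevance.
Qed.

Section LMap.
Variables (R : comNzRingType) (pi : R) (B1 B2 : comAlgType R).
Variables (fl1 : flat_over pi B1) (fl2 : flat_over pi B2) (g : pts B1 B2).
Local Notation L1 := (Loc fl1).
Local Notation L2 := (Loc fl2).

Definition lmap_def (z : L1) : L2 := \pi_L2 (sval g (repr z).1, (repr z).2).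
Definition lmap := locked lmap_def.
Lemma lmap_pi x : lmap (\pi_L1 x) = \pi_L2 (sval g x.1, x.2).
Proof. rewrite /lmap -lock; apply/pieqP; rewrite /= -!gPX; congr (sval g _); symmetry; exact: repr_eq. Qed.

Lemma lmap_hom : is_alghom lmap.
Proof.
split; [|split; [|split]].
- elim/quotW=> x; elim/quotW=> y; rewrite !piD !lmap_pi piD; congr (\pi_(Loc fl2) _).
  case: x => [x1 n1]; case: y => [y1 n2]; rewrite /addf /= gD !gPX //.
- elim/quotW=> x; elim/quotW=> y; rewrite !piM !lmap_pi piM; congr (\pi_(Loc fl2) _).
  case: x => [x1 n1]; case: y => [y1 n2]; rewrite /mulf /= gM //.
- rewrite -!pi1 lmap_pi; congr (\pi_(Loc fl2) _); rewrite /= gunit //.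
- move=> r; elim/quotW=> x; rewrite !piZ !lmap_pi piZ; congr (\pi_(Loc fl2) _).
  case: x => [x1 n1]; rewrite /scalef /= !mulr_algl gZ //.
Qed.
Definition lmapP : pts L1 L2 := exist _ lmap lmap_hom.
End LMap.

Theorem theorem2p11 (R : idomainType) (pi : R) (hpi : is_dvr_uniformizer pi)
  (C : comAlgType R) (GC : grp_sch C) (flatC : flat_over pi C)
  (A : nat -> comAlgType R) (GA : forall n, grp_sch (A n))
  (flatA : forall n, flat_over pi (A n))
  (phi : forall n, pts (A n) C)
  (phi_hom : forall n, grp_hom GC (GA n) (phi n))
  (phi0_gen : generic_iso pi (phi 0%N))
  (f : forall n, pts (A n) (A n.+1))
  (f_hom : forall n, grp_hom (GA n.+1) (GA n) (f n))
  (f_blowup : forall n,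
      neron_blowup pi (sch_image_special_ideal pi (phi n)) (f n))
  (phi_fact : forall n (a : A n), sval (phi n) a = sval (phi n.+1) (sval (f n) a)) :
  (* the induced map colim_n A n -> C is bijective, i.e. lim_n rho_n is an isomorphism *)
  (forall c : C, exists (n : nat) (a : A n), sval (phi n) a = c) /\
  (forall (n : nat) (a : A n), sval (phi n) a = 0 -> exists k : nat, trans f n k a = 0).

Proof.
have gen : forall n (t : A n.+1), exists m a, (pi%:A)^+m * t = sval (f n) a.
  move=> n t; case: (f_blowup n) => _ [_ [_ Hg]].
  apply: (Hg t (fun t => exists m a, (pi%:A)^+m * t = sval (f n) a)).
  - move=> x [[a ->]|[j [_ hj]]]; first by exists 0%N, a; rewrite expr0 mul1r.
    by exists 1%N, j; rewrite expr1 mulr_algl.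
  - by exists 0%N, 1; rewrite expr0 mul1r gunit.
  - move=> x y [m [a ha]] [m' [a' ha']].
    exists (m + m')%N, ((pi%:A)^+m' * a - (pi%:A)^+m * a').
    rewrite gB !gPX -ha -ha' exprD; ring.
  - move=> x y [m [a ha]] [m' [a' ha']]; exists (m + m')%N, (a * a').
    rewrite gM -ha -ha' exprD; ring.
have [g0 Hgf Hfg] := phi0_gen _ (liota_inv (flatA 0%N)).
pose y := g0 (liotaP (flatA 0%N)).
have Hy : forall a, sval y (sval (phi 0%N) a) = liota (flatA 0%N) a.
  move=> a; have := congr1 (fun p : pts _ _ => sval p a) (Hfg (liotaP (flatA 0%N))).
  by [].
have phi0_inj : injective (sval (phi 0%N)).
  by move=> a b h; apply: (@liota_inj _ _ _ (flatA 0%N)); rewrite -!Hy h.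
have inj : forall n a, sval (phi n) a = 0 -> a = 0.
  elim=> [|n IH] a h; first by apply: phi0_inj; rewrite h gzero.
  have [m [b hb]] := gen n a.
  have : sval (phi n) b = 0 by rewrite phi_fact -hb gPX h mulr0.
  move/IH => b0; move: hb; rewrite b0 gzero; exact: (flatP (flatA n.+1)).
have Finj := bij_inj (phi0_gen _ (liota_inv flatC)).
have key : forall c, exists m a, (pi%:A)^+m * c = sval (phi 0%N) a.
  move=> c.
  have E : Defs.pcomp y (lmapP (flatA 0%N) flatC (phi 0%N)) = liotaP flatC.
    apply: Finj; apply: pts_eq => a /=.
    by rewrite Hy /liota lmap_pi.
  have := congr1 (fun p : pts _ _ => sval p c) E => /=.
  rewrite -[sval y c]reprK lmap_pi /liota => /pieqP /=; rewrite expr0 mul1r => h.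
  by exists (repr (sval y c)).2, (repr (sval y c)).1; rewrite h.
have up : forall m n a c, (pi%:A)^+m * c = sval (phi n) a ->
    exists n' a', sval (phi n') a' = c.
  elim=> [|m IH] n a c h; first by exists n, a; rewrite -h expr0 mul1r.
  have hJ : sch_image_special_ideal pi (phi n) a.
    by exists ((pi%:A)^+m * c); rewrite -h exprS -mulrA mulr_algl.
  have [b hb] := (f_blowup n).2.2.1 a hJ.
  apply: (IH n.+1 b c).
  apply/eqP; rewrite -subr_eq0; apply/eqP; apply: (flatC).
  rewrite scalerBr -gZ hb -phi_fact -h exprS -mulrA mulr_algl subrr //.
split.
- move=> c; have [m [a h]] := key c; exact: up m 0%N a c h.
- move=> n a h; exists 0%N; exact: inj n a h.
Qed.
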